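(* Let $\mathcal{R}$ be a left-linear, left-finite TRS and suppose $s$ strongly $p$-converges to $t$ in $\mathcal{R}$. Then for each finite set $P$ of non-$\bot$ positions of $t$, there is a finite reduction $s\to^* t'$ in $\mathcal{R}$ such that $t$ and $t'$ coincide in $P$ (i.e. $t(\pi)=t'(\pi)$ for all $\pi\in P$).
   Context: Left-finite = all left-hand sides finite. Partial terms over $\Sigma_\bot=\Sigma\uplus\{\bot\}$ ordered by $\le_\bot$ (replacing subterms by $\bot$) form a complete semilattice; $\liminf_{\iota\to\alpha}a_\iota=\bigvee_{\beta<\alpha}\bigwedge_{\beta\le\iota<\alpha}a_\iota$. A reduction $(t_\iota\to_{\pi_\iota}t_{\iota+1})_{\iota<\alpha}$ with contexts $c_\iota$ ($t_\iota$ with position $\pi_\iota$ replaced by $\bot$) strongly $p$-converges to $t$ if $\liminf_{\iota\to\lambda}c_\iota=t_\lambda$ for every limit $\lambda<\alpha$ and $t$ is the last term (closed) or $t=\liminf_{\iota\to\alpha}c_\iota$ (open). *)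

(* Defs.v *)
From mathcomp Require Import all_boot.
Set Implicit Arguments.
Unset Strict Implicit.
Unset Printing Implicit Defensive.

Section ITRS.
Variables (F V : Type) (arity : F -> nat).

Inductive sym := Fn of F | Vr of V | Bot.

Definition sarity (a : sym) : nat :=
  match a with Fn f => arity f | _ => 0 end.

(* A (possibly infinite, possibly partial) term is given by its labelling of
   positions (sequences of naturals); None = not a position of the term. *)
Definition term := seq nat -> option sym.

Definition wf (t : term) : Prop :=
  t [::] <> None /\
  forall p i, t (rcons p i) <> None <-> exists a, t p = Some a /\ i < sarity a.

Definition total (t : term) : Prop := forall p, t p <> Some Bot.

Definition finite_term (t : term) : Prop :=
  exists ps : seq (seq nat), forall p, t p <> None -> p \in ps.

Fixpoint substp (sigma : V -> term) (t : term) (q rest : seq nat) : option sym :=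
  match t q with
  | None => None
  | Some (Vr x) => sigma x rest
  | Some a => match rest with
              | [::] => Some a
              | i :: r => substp sigma t (rcons q i) r
              end
  end.
Definition subst (sigma : V -> term) (t : term) : term :=
  fun p => substp sigma t [::] p.

Definition repl (s : term) (pi : seq nat) (u : term) : term :=
  fun p => if prefix pi p then u (drop (size pi) p) else s p.

Definition botterm : term := fun p => if p is [::] then Some Bot else None.

Definition TRS := term -> term -> Prop.

Definition vars (t : term) (x : V) : Prop := exists p, t p = Some (Vr x).

Definition is_TRS (R : TRS) : Prop :=
  forall l r, R l r ->
    wf l /\ wf r /\ total l /\ total r /\
    (exists f, l [::] = Some (Fn f)) /\
    (forall x, vars r x -> vars l x).

Definition left_linear (R : TRS) : Prop :=
  forall l r, R l r ->
    forall p q x, l p = Some (Vr x) -> l q = Some (Vr x) -> p = q.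

Definition left_finite (R : TRS) : Prop :=
  forall l r, R l r -> finite_term l.

Definition step (R : TRS) (s : term) (pi : seq nat) (u : term) : Prop :=
  exists l r (sigma : V -> term),
    [/\ R l r, (forall x, wf (sigma x)), s pi <> None,
        (forall p, s (pi ++ p) = subst sigma l p) &
        (forall p, u p = repl s pi (subst sigma r) p)].

Inductive reds (R : TRS) : term -> term -> Prop :=
  | reds_refl s : reds R s s
  | reds_step s pi u v : step R s pi u -> reds R u v -> reds R s v.

Definition le_bot (s t : term) : Prop :=
  forall p a, s p = Some a -> a <> Bot -> t p = Some a.

Definition is_glb (S : term -> Prop) (g : term) : Prop :=
  [/\ wf g, (forall u, S u -> le_bot g u) &
      (forall h, wf h -> (forall u, S u -> le_bot h u) -> le_bot h g)].

Definition is_lub (S : term -> Prop) (g : term) : Prop :=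
  [/\ wf g, (forall u, S u -> le_bot u g) &
      (forall h, wf h -> (forall u, S u -> le_bot u h) -> le_bot g h)].

(* Ordinals <= alpha are represented by a well-ordered type W with a largest
   element. *)
Definition wellorder (W : Type) (lt : W -> W -> Prop) : Prop :=
  [/\ (forall x, ~ lt x x), (forall x y z, lt x y -> lt y z -> lt x z),
      (forall x y, lt x y \/ x = y \/ lt y x) & well_founded lt].

Definition leW (W : Type) (lt : W -> W -> Prop) (x y : W) : Prop := lt x y \/ x = y.

Definition succ_of (W : Type) (lt : W -> W -> Prop) (x y : W) : Prop :=
  lt x y /\ forall z, lt x z -> leW lt y z.

Definition is_limit (W : Type) (lt : W -> W -> Prop) (lam : W) : Prop :=
  (exists x, lt x lam) /\ (forall x, lt x lam -> exists y, lt x y /\ lt y lam).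

Definition is_liminf (W : Type) (lt : W -> W -> Prop) (c : W -> term)
    (lam : W) (t : term) : Prop :=
  exists b : W -> term,
    (forall beta, lt beta lam ->
       is_glb (fun u => exists iota, [/\ leW lt beta iota, lt iota lam & u = c iota])
              (b beta)) /\
    is_lub (fun u => exists beta, lt beta lam /\ u = b beta) t.

(* s strongly p-converges to t in R: there is a reduction
   (t_iota ->_{pi_iota} t_{iota+1})_{iota < alpha} with t_0 = s, where W is the
   set of ordinals <= alpha (alpha = the top element a), T iota = t_iota,
   P iota = pi_iota, contexts c_iota = t_iota[bot]_{pi_iota}. *)
Definition spconv (R : TRS) (s t : term) : Prop :=
  exists (W : Type) (lt : W -> W -> Prop) (a : W) (T : W -> term) (P : W -> seq nat),
    let c := fun i => repl (T i) (P i) botterm in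
    wellorder lt /\ (forall x, leW lt x a) /\
    (forall z, (forall x, leW lt z x) -> forall p, T z p = s p) /\
    (forall i k, lt i a -> succ_of lt i k -> step R (T i) (P i) (T k)) /\
    (forall lam, lt lam a -> is_limit lt lam -> is_liminf lt c lam (T lam)) /\
    (~ is_limit lt a -> forall p, t p = T a p) /\
    (is_limit lt a -> is_liminf lt c a t).

End ITRS.

(* Main.v *)
Require Import Defs.
From mathcomp Require Import all_boot.
From Stdlib Require Import Classical ClassicalEpsilon FunctionalExtensionality.
Set Implicit Arguments. Unset Strict Implicit.

Section Basic.
Variables (F V : Type) (arity : F -> nat).
Local Notation tm := (term F V).
Local Notation wf := (wf arity).
Local Notation VR := (Vr F).
Local Notation BOT := (Bot F V).

Lemma wf_pre (t : tm) p q : wf t -> t (p ++ q) <> None -> t p <> None.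
Proof.
move=> [_ Hw]; elim/last_ind: q => [|q i IH]; first by rewrite cats0.
rewrite -rcons_cat => /Hw [a [Ha _]]; apply: IH; by rewrite Ha.
Qed.

Lemma wf_var_leaf (t : tm) p1 p2 x : wf t -> t (p1 ++ p2) <> None ->
  t p1 = Some (VR x) -> p2 = [::].
Proof.
move=> Hw; case: p2 => // i p2 Hn Hx; exfalso.
have : t (rcons p1 i) <> None.
  by apply: (wf_pre (q:=p2)) => //; rewrite cat_rcons.
by move/(proj2 Hw) => [a [Ha Hi]]; move: Ha Hi; rewrite Hx => -[<-].
Qed.

Lemma substp_var (sigma : V -> tm) (t : tm) q p1 p2 x :
  (forall p' i p'', p1 = p' ++ i :: p'' ->
     exists a, t (q ++ p') = Some a /\ forall y, a <> VR y) ->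
  t (q ++ p1) = Some (VR x) -> substp sigma t q (p1 ++ p2) = sigma x p2.
Proof.
elim: p1 q => [|i p1 IH] q Hpre /=.
  by rewrite cats0 => Hx; case: p2 => [|j p2] /=; rewrite Hx.
move=> Hx.
have [a [Ha Hav]] := Hpre [::] i p1 erefl; rewrite cats0 in Ha.
rewrite Ha; case: a Ha Hav => [f|y|] Ha Hav //=; try by case: (Hav y).
all: (apply: IH; last by rewrite cat_rcons);
 move=> p' j p'' E; have [b [Hb Hbv]] := Hpre (i :: p') j p'' (ltac:(by rewrite E));
 by exists b; rewrite cat_rcons.
Qed.

Lemma substp_novar (sigma : V -> tm) (t : tm) q p :
  (forall p1 p2 x, p = p1 ++ p2 -> t (q ++ p1) <> Some (VR x)) ->
  (forall p' i p'', p = p' ++ i :: p'' -> t (q ++ p') = None -> t (q ++ p) = None) ->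
  substp sigma t q p = t (q ++ p).
Proof.
elim: p q => [|i p IH] q Hnv Hnone /=.
  rewrite cats0; case E: (t q) => [[f|y|]|] //.
  by have := Hnv [::] [::] y erefl; rewrite cats0 E.
case E: (t q) => [a|].
  have Hrest : substp sigma t (rcons q i) p = t (q ++ i :: p).
    rewrite IH -?cat_rcons //.
      by move=> p1 p2 x Ep; rewrite cat_rcons; apply: (Hnv (i :: p1) p2); rewrite Ep.
    move=> p' j p'' Ep; rewrite !cat_rcons; apply: (Hnone (i :: p') j p''); by rewrite ?Ep.
  case: a E => [f|y|] E //=.
  by exfalso; apply: (Hnv [::] (i :: p) y) => //; rewrite cats0.
by symmetry; apply: (Hnone [::] i p) => //; rewrite cats0.
Qed.

Lemma wf_none_ext (t : tm) p q : wf t -> t p = None -> t (p ++ q) = None.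
Proof.
move=> Hw Hp; case E: (t (p ++ q)) => [a|] //; exfalso.
by apply: (wf_pre (q := q) Hw _ Hp); rewrite E.
Qed.

Lemma subst_var (sigma : V -> tm) (t : tm) p1 p2 x : wf t ->
  t p1 = Some (VR x) -> subst sigma t (p1 ++ p2) = sigma x p2.
Proof.
move=> Hw Hx; rewrite /subst; apply: substp_var => //.
move=> p' i p'' E; rewrite /=.
have Hn : t p' <> None.
  apply: (wf_pre (q := i :: p'') Hw); by rewrite -E Hx.
case E': (t p') Hn => [a|] // _; exists a; split=> // y Ey; subst a.
have H := wf_var_leaf (p1 := p') (p2 := i :: p'') Hw.
by have := H y ltac:(by rewrite -E Hx) E'.
Qed.

Lemma subst_novar (sigma : V -> tm) (t : tm) p : wf t ->
  (forall p1 p2 x, p = p1 ++ p2 -> t p1 <> Some (VR x)) ->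
  subst sigma t p = t p.
Proof.
move=> Hw Hnv; rewrite /subst; apply: substp_novar => //.
by move=> p' i p'' -> /= /(wf_none_ext (i :: p'') Hw).
Qed.


Definition HV (t : tm) p := exists p1 p2 x, p = p1 ++ p2 /\ t p1 = Some (VR x).

Lemma subst_novar' (sigma : V -> tm) (t : tm) p : wf t -> ~ HV t p ->
  subst sigma t p = t p.
Proof.
move=> Hw Hn; apply: subst_novar => // p1 p2 x E Hx; apply: Hn; by exists p1, p2, x.
Qed.

Lemma wf_sub (t : tm) p : wf t -> t p <> None -> wf (fun q => t (p ++ q)).
Proof.
move=> [H0 Hw] Hp; split; first by rewrite cats0.
by move=> q i; rewrite -rcons_cat; apply: Hw.
Qed.

Lemma wf_subst (sigma : V -> tm) (r : tm) : wf r -> (forall x, wf (sigma x)) ->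
  wf (subst sigma r).
Proof.
move=> Hw Hs; split.
  case: (classic (exists x, r [::] = Some (VR x))) => [[x Hx]|Hn].
    by rewrite -[[::]]cats0 (subst_var _ _ Hw Hx); case: (Hs x).
  rewrite subst_novar' //; first by case: Hw.
  move=> [p1 [p2 [x [E Hx]]]]; apply: Hn; exists x.
  by case: p1 E Hx => // -[].
move=> p i.
case: (classic (HV r p)) => [[p1 [p2 [x [-> Hx]]]]|Hn].
  rewrite rcons_cat !(subst_var _ _ Hw Hx); apply: (proj2 (Hs x)).
rewrite (subst_novar' _ Hw Hn).
case: (classic (HV r (rcons p i))) => [[p1 [p2 [x [E Hx]]]]|Hn'].
  have E2 : p2 = [::].
    case/lastP: p2 E => // p2' j; rewrite -rcons_cat => /eqP; rewrite eqseq_rcons.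
    case/andP=> /eqP Ep _; exfalso; apply: Hn; by exists p1, p2', x.
  subst p2; rewrite cats0 in E; subst p1.
  rewrite -[rcons p i]cats0 (subst_var _ _ Hw Hx); split.
    by move=> _; apply/(proj2 Hw); rewrite Hx.
  by move=> _; case: (Hs x).
rewrite (subst_novar' _ Hw Hn'); apply: (proj2 Hw).
Qed.

Lemma wf_repl (s w : tm) pi : wf s -> s pi <> None -> wf w -> wf (repl s pi w).
Proof.
move=> Hs Hpi Hw; rewrite /repl; split.
  by case: pi Hpi => [|j pi] /= Hpi; [case: Hw | case: Hs].
move=> p i.
case Hp: (prefix pi p).
  have Hr : prefix pi (rcons p i) by apply: prefix_trans Hp (prefix_rcons _ _).
  rewrite Hr; case/prefixP: Hp => q ->; rewrite rcons_cat !drop_size_cat //.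
  exact: (proj2 Hw).
case Hr: (prefix pi (rcons p i)).
  case/prefixP: Hr => q E.
  have Eq : q = [::].
    case/lastP: q E => // q' j; rewrite -rcons_cat => /eqP; rewrite eqseq_rcons.
    case/andP=> /eqP Ep _; by rewrite Ep prefix_prefix in Hp.
  subst q; rewrite cats0 in E; subst pi; rewrite drop_size; split.
    by move=> _; apply/(proj2 Hs).
  by move=> _; case: Hw.
exact: (proj2 Hs).
Qed.

Definition nonbot (u : tm) (Ps : seq (seq nat)) :=
  forall p, p \in Ps -> exists a, u p = Some a /\ a <> BOT.

Definition isFn (o : option (sym F V)) := if o is Some (Fn _) then true else false.

Lemma pullback (R : TRS F V) (u v : tm) pi (Ps : seq (seq nat)) :
  is_TRS arity R -> left_linear R -> left_finite R -> step arity R u pi v ->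
  nonbot v Ps ->
  exists Ps', nonbot u Ps' /\
   forall t', wf t' -> (forall p, p \in Ps' -> u p = t' p) ->
   exists t'', step arity R t' pi t'' /\ wf t'' /\ forall p, p \in Ps -> v p = t'' p.
Proof.
move=> HT Hll Hlf [l [r [sigma [HR Hsig Hpi Hu Hv]]]] HPs.
have [Hwl [Hwr [Htl [Htr [[f0 Hl0] Hvars]]]]] := HT l r HR.
have [ps Hps] := Hlf l r HR.
pose px x := epsilon (inhabits [::]) (fun p => l p = Some (VR x)).
pose px' x := if l (px x) is Some (@Vr _ _ _) then px x else [::].
have K1 : forall y, vars l y -> l (px' y) = Some (VR y).
  move=> y [p Hp]; have Hs : l (px y) = Some (VR y).
    exact: (epsilon_spec (inhabits [::]) (fun p => l p = Some (VR y)) (ex_intro _ p Hp)).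
  by rewrite /px' Hs.
have K2 : forall y p2, vars l y -> u (pi ++ px' y ++ p2) = sigma y p2.
  by move=> y p2 Hy; rewrite Hu (subst_var _ _ Hwl (K1 y Hy)).
have Kpx : forall y, l (px' y) <> None.
  by move=> y; rewrite /px'; case E: (l (px y)) => [[f|z|]|] //; rewrite ?E ?Hl0.
have NHV : forall q a, l q = Some a -> (forall y, a <> VR y) -> ~ HV l q.
  move=> q a Hq Ha [p1 [p2 [x [E Hx]]]].
  have E2 : p2 = [::].
    by apply: (wf_var_leaf (p1 := p1) (x := x) Hwl) => //; rewrite -E Hq.
  by subst p2; rewrite cats0 in E; subst q; rewrite Hx in Hq; case: Hq => /esym /Ha.
have Kfn : forall q f, l q = Some (Fn V f) -> u (pi ++ q) = l q.
  move=> q f Hq; rewrite Hu subst_novar' //; by apply: (NHV q _ Hq).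
pose Lmatch := [seq pi ++ q | q <- ps & isFn (l q)].
pose Lp p := if prefix pi p then
   pmap (fun k => let q := drop (size pi) p in
          match r (take k q) with Some (@Vr _ _ y) => Some (pi ++ px' y ++ drop k q)
          | _ => None end) (iota 0 (size (drop (size pi) p)).+1)
   else [:: p].
exists (Lmatch ++ flatten (map Lp Ps)); split.
  move=> p; rewrite mem_cat => /orP [].
    case/mapP => q; rewrite mem_filter => /andP [Hfn Hq] ->.
    case E: (l q) Hfn => [[f||]|] // _; exists (Fn V f); split=> //.
    by rewrite (Kfn q f E) E.
  case/flatten_mapP => p0 Hp0; rewrite /Lp; have [a [Ha Hab]] := HPs p0 Hp0.
  rewrite Hv /repl in Ha; case Hpre: (prefix pi p0) Ha => Ha; last first.
    by rewrite inE => /eqP ->; exists a.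
  rewrite mem_pmap => /mapP [k _]; set q := drop (size pi) p0.
  case E: (r (take k q)) => [[f|y|]|] // -[->].
  have Hy : vars l y by apply: Hvars; exists (take k q).
  rewrite K2 //; exists a; split=> //.
  rewrite -Ha; have -> : drop (size pi) p0 = take k q ++ drop k q by rewrite cat_take_drop.
  by rewrite (subst_var _ _ Hwr E).

move=> t' Hwt' Hag.
have M0 : forall q f, l q = Some (Fn V f) -> t' (pi ++ q) = l q.
  move=> q f Hq; rewrite -Hag ?(Kfn q f Hq) // mem_cat; apply/orP; left.
  apply/mapP; exists q => //; rewrite mem_filter Hq /=; apply: Hps; by rewrite Hq.
have M : forall q, ~ HV l q -> t' (pi ++ q) = l q.
  move=> q0; elim/last_ind: q0 => [|w i IH] Hn.
    by rewrite cats0 -[pi]cats0 (M0 _ _ Hl0).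
  have Hn' : ~ HV l w.
    move=> [p1 [p2 [x [E Hx]]]]; apply: Hn; exists p1, (rcons p2 i), x.
    by rewrite E rcons_cat.
  case El: (l (rcons w i)) => [a|].
    case: a El => [f|y|] El.
    - by rewrite (M0 _ _ El) El.
    - exfalso; apply: Hn; exists (rcons w i), [::], y; by rewrite cats0.
    - by have := Htl (rcons w i); rewrite El.
  rewrite -rcons_cat; case Et: (t' (rcons (pi ++ w) i)) => [b|] //; exfalso.
  have : t' (rcons (pi ++ w) i) <> None by rewrite Et.
  move/(proj2 Hwt') => [a [Ha Hi]]; rewrite IH // in Ha.
  have : l (rcons w i) <> None by apply/(proj2 Hwl); exists a.
  by rewrite El.
have M1 : forall q, l q <> None -> t' (pi ++ q) <> None.
  case/lastP => [|q i] Hq; first by rewrite cats0 -[pi]cats0 (M0 _ _ Hl0).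
  have [a [Ha Hi]] := proj1 (proj2 Hwl q i) Hq.
  case: a Ha Hi => [f|y|] Ha Hi //.
  rewrite -rcons_cat; apply/(proj2 Hwt'); exists (Fn V f); split=> //.
  by rewrite (M0 _ _ Ha).
pose sigma' x := fun q => t' (pi ++ px' x ++ q).
have Hsig' : forall x, wf (sigma' x).
  move=> x; rewrite /sigma'.
  have -> : (fun q => t' (pi ++ px' x ++ q)) = (fun q => t' ((pi ++ px' x) ++ q)).
    by apply: functional_extensionality => q; rewrite catA.
  by apply: wf_sub => //; apply: M1.
have Mt : forall q, t' (pi ++ q) = subst sigma' l q.
  move=> q; case: (classic (HV l q)) => [[p1 [p2 [x [-> Hx]]]]|Hn].
    rewrite (subst_var _ _ Hwl Hx) /sigma'.
    have Hxl : vars l x by exists p1.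
    by rewrite (Hll l r HR _ _ _ (K1 x Hxl) Hx).
  by rewrite (subst_novar' _ Hwl Hn) M.
exists (repl t' pi (subst sigma' r)); split; [|split].
- exists l, r, sigma'; split=> //.
  by rewrite -[pi]cats0; apply: M1; rewrite Hl0.
- apply: wf_repl => //; last by apply: wf_subst.
  by rewrite -[pi]cats0; apply: M1; rewrite Hl0.
move=> p Hp; rewrite Hv /repl.
have HLp : forall z, z \in Lp p -> u z = t' z.
  move=> z Hz; apply: Hag; rewrite mem_cat; apply/orP; right.
  by apply/flatten_mapP; exists p.
case Hpre: (prefix pi p); last by apply: HLp; rewrite /Lp Hpre inE.
set q := drop (size pi) p.
case: (classic (HV r q)) => [[p1 [p2 [y [Eq Hy]]]]|Hn].
  rewrite Eq !(subst_var _ _ Hwr Hy) /sigma'.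
  have Hyl : vars l y by apply: Hvars; exists p1.
  rewrite -K2 //; apply: HLp; rewrite /Lp Hpre mem_pmap; apply/mapP.
  exists (size p1).
    by rewrite mem_iota /= -/q Eq size_cat ltnS leq_addr.
  by rewrite -/q Eq take_size_cat // drop_size_cat // Hy.
by rewrite !(subst_novar' _ Hwr Hn).
Qed.

Lemma le_bot_refl (g : tm) : le_bot g g.
Proof. by move=> p a. Qed.

Section Lim.
Variables (W : Type) (lt : W -> W -> Prop) (Hwo : wellorder lt).

Lemma leW_trans x y z : leW lt x y -> leW lt y z -> leW lt x z.
Proof.
case: Hwo => _ Htr _ _ [Hxy|<-] [Hyz|<-]; rewrite /leW; auto.
by left; apply: Htr Hxy Hyz.
Qed.

Lemma liminf_stable (c : W -> tm) lam (u : tm) p a :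
  is_limit lt lam -> is_liminf arity lt c lam u -> u p = Some a -> a <> BOT ->
  exists beta, lt beta lam /\
    forall iota, leW lt beta iota -> lt iota lam -> c iota p = Some a.
Proof.
move=> [[w0 Hw0] _] [b [Hglb [Hwu Hub Hleast]]] Hup Ha.
case: Hwo => Hirr Htr Htri _.
have chain : forall be be', lt be lam -> lt be' lam -> leW lt be be' ->
    le_bot (b be) (b be').
  move=> be be' Hb Hb' [Hlt|<-]; last by apply: le_bot_refl.
  have [Hw1 _ _] := Hglb be Hb.
  have [_ _ H3] := Hglb be' Hb'; apply: H3 => // u' [io [Hio Hiol ->]].
  have [_ H2 _] := Hglb be Hb; apply: H2; exists io; split=> //.
  by apply: leW_trans Hio; left.
have uniq : forall be be' q x y, lt be lam -> lt be' lam ->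
    b be q = Some x -> x <> BOT -> b be' q = Some y -> y <> BOT -> x = y.
  move=> be be' q x y Hb Hb' Hx Hxb Hy Hyb.
  case: (Htri be be') => [Hl|[E|Hl]].
  - by have := chain be be' Hb Hb' (or_introl Hl) q x Hx Hxb; rewrite Hy => -[].
  - by subst be'; rewrite Hx in Hy; case: Hy.
  - by have := chain be' be Hb' Hb (or_introl Hl) q y Hy Hyb; rewrite Hx => -[].
pose P q := fun be => lt be lam /\ exists x, b be q = Some x /\ x <> BOT.
pose h := fun q => if excluded_middle_informative (exists be, P q be)
   then b (epsilon (inhabits w0) (P q)) q
   else if excluded_middle_informative (exists be, lt be lam /\ b be q <> None)
   then Some BOT else None.
have H1 : forall q be x, lt be lam -> b be q = Some x -> x <> BOT -> h q = Some x.
  move=> q be x Hb Hx Hxb; rewrite /h.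
  case: excluded_middle_informative => [Hex|Hn]; last first.
    by exfalso; apply: Hn; exists be; split=> //; exists x.
  have [Hb0 [y [Hy Hyb]]] : P q (epsilon (inhabits w0) (P q)) by apply: epsilon_spec.
  by rewrite Hy (uniq _ _ _ _ _ Hb Hb0 Hx Hxb Hy Hyb).
have H2 : forall q x, h q = Some x -> x <> BOT -> exists be, lt be lam /\ b be q = Some x.
  move=> q x; rewrite /h.
  case: excluded_middle_informative => [Hex|Hn].
    have [Hb0 _] : P q (epsilon (inhabits w0) (P q)) by apply: epsilon_spec.
    by move=> Hx _; eexists; split; [apply: Hb0|apply: Hx].
  by case: excluded_middle_informative => // _ [<-].
have H3 : forall q, h q <> None <-> exists be, lt be lam /\ b be q <> None.
  move=> q; rewrite /h.
  case: excluded_middle_informative => [Hex|Hn].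
    have [Hb0 [y [Hy _]]] : P q (epsilon (inhabits w0) (P q)) by apply: epsilon_spec.
    by split=> _ //; [eexists; split; [apply: Hb0|rewrite Hy] | rewrite Hy].
  by case: excluded_middle_informative => Hn2; split=> //; case: Hn2.
have Hwh : wf h.
  split.
    apply/H3; exists w0; split=> //; by have [[? _] _ _] := Hglb w0 Hw0.
  move=> q i; split.
    move/H3 => [be [Hb Hn]]; have [[_ Hwb] _ _] := Hglb be Hb.
    move/Hwb: Hn => [x [Hx Hi]]; exists x; split=> //.
    by apply: (H1 _ be) => //; case: x Hx Hi => // -[].
  move=> [x [Hx Hi]]; have Hxb : x <> BOT by case: x Hx Hi => // -[].
  have [be [Hb Hbx]] := H2 _ _ Hx Hxb.
  apply/H3; exists be; split=> //; have [[_ Hwb] _ _] := Hglb be Hb.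
  by apply/Hwb; exists x.
have Hleh : le_bot u h.
  apply: Hleast => // u' [be [Hb ->]] q x Hx Hxb; exact: (H1 _ be).
have [be [Hb Hbp]] := H2 p a (Hleh p a Hup Ha) Ha.
exists be; split=> // io Hio Hiol.
have [_ Hlb _] := Hglb be Hb.
apply: (Hlb (c io)) => //; by exists io.
Qed.

End Lim.

Lemma reds_snoc (R : TRS F V) (s t1 t2 : tm) pi :
  reds arity R s t1 -> step arity R t1 pi t2 -> reds arity R s t2.
Proof.
elim=> [x|x pi0 y z Hst _ IH] H.
  by apply: (reds_step H); apply: reds_refl.
by apply: (reds_step Hst); apply: IH.
Qed.

Lemma repl_bot (x : tm) pi p b : repl x pi (botterm F V) p = Some b -> b <> BOT ->
  x p = Some b.
Proof.
rewrite /repl; case: ifP => // _ H Hb; move: H; rewrite /botterm.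
by case: drop => [|? ?] //= -[E]; subst b.
Qed.

End Basic.

Theorem proposition6p5 (F V : Type) (arity : F -> nat) (R : TRS F V)
    (s t : term F V) :
  is_TRS arity R -> left_linear R -> left_finite R -> wf arity s ->
  spconv arity R s t ->
  forall Ps : seq (seq nat),
    (forall pi, pi \in Ps -> exists a, t pi = Some a /\ a <> Bot F V) ->
    exists t' : term F V,
      reds arity R s t' /\ (forall pi, pi \in Ps -> t pi = t' pi).
Proof.
move=> HT Hll Hlf Hws [W [lt [a [T [P H]]]]]; cbv zeta in H.
move: H => [Hwo [Htop [Hinit [Hstep [Hlim [Hcl Hop]]]]]].
pose c := fun i => repl (T i) (P i) (botterm F V).
pose Q := fun io => forall Ps, nonbot (T io) Ps ->
  exists t', reds arity R s t' /\ wf arity t' /\ forall p, p \in Ps -> T io p = t' p.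
have [Hirr Htr Htri Hwf] := Hwo.
have LIM : forall lam (u : term F V), is_limit lt lam -> is_liminf arity lt c lam u ->
    (forall be, lt be lam -> Q be) -> forall Ps, nonbot u Ps ->
    exists t', reds arity R s t' /\ wf arity t' /\ forall p, p \in Ps -> u p = t' p.
  move=> lam u Hl Hli HQ Ps HPs.
  have [be [Hbe Hall]] : exists be, lt be lam /\ forall p, p \in Ps ->
      forall io, leW lt be io -> lt io lam -> T io p = u p.
    elim: Ps HPs => [|p Ps IH] HPs.
      by case: Hl => [[w0 Hw0] _]; exists w0; split.
    have [b1 [Hb1 H1]] : exists be, lt be lam /\ forall p, p \in Ps ->
        forall io, leW lt be io -> lt io lam -> T io p = u p.
      by apply: IH => q Hq; apply: HPs; rewrite inE Hq orbT.
    have [x [Hx Hxb]] := HPs p (mem_head _ _).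
    have [b2 [Hb2 H2]] := liminf_stable Hwo Hl Hli Hx Hxb.
    have H2' : forall io, leW lt b2 io -> lt io lam -> T io p = u p.
      by move=> io Hio Hiol; rewrite Hx; apply: (repl_bot (H2 io Hio Hiol)).
    case: (Htri b1 b2) => [Hlt|[E|Hlt]].
    - exists b2; split=> // q; rewrite inE => /orP [/eqP ->|Hq] // io Hio.
      by apply: H1 => //; apply: (leW_trans Hwo _ Hio); left.
    - subst b2; exists b1; split=> // q; rewrite inE => /orP [/eqP ->|Hq] //.
      by apply: H1.
    - exists b1; split=> // q; rewrite inE => /orP [/eqP ->|Hq]; last by apply: H1.
      by move=> io Hio; apply: H2'; apply: (leW_trans Hwo _ Hio); left.
  have HPs' : nonbot (T be) Ps.
    by move=> p Hp; rewrite (Hall p Hp be (or_intror erefl) Hbe); apply: HPs.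
  have [t' [Hr [Hw Ht']]] := HQ be Hbe Ps HPs'.
  exists t'; split=> //; split=> // p Hp.
  rewrite -Ht' //; symmetry; apply: (Hall p Hp be (or_intror erefl) Hbe).
have MAIN : forall io, leW lt io a -> (is_limit lt io -> lt io a) -> Q io.
  elim/(well_founded_ind Hwf) => io IH Hio Hlio.
  have IH' : forall x, lt x io -> Q x.
    move=> x Hx; apply: IH => //.
    move=> _; case: Hio => [Hio|<-]; [exact: Htr Hx Hio | by []].
  case: (classic (exists x, lt x io)) => [Hex|Hnex].
    case: (classic (is_limit lt io)) => [Hl|Hnl].
      move=> Ps HPs; have Hli := Hlim io (Hlio Hl) Hl.
      exact: (LIM io (T io) Hl Hli IH' Ps HPs).
    have [x [Hx Hnx]] : exists x, lt x io /\ ~ exists y, lt x y /\ lt y io.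
      apply: NNPP => Hn; apply: Hnl; split=> // x Hx.
      apply: NNPP => Hn2; apply: Hn; by exists x.
    have Hsucc : succ_of lt x io.
      split=> // z Hz; case: (Htri z io) => [Hzi|[->|Hzi]].
      - by exfalso; apply: Hnx; exists z.
      - by right.
      - by left.
    have Hxa : lt x a by case: Hio => [Hio|<-] //; apply: Htr Hx Hio.
    have Hst := Hstep x io Hxa Hsucc.
    move=> Ps HPs.
    have [Ps' [HPs' Hpb]] := pullback HT Hll Hlf Hst HPs.
    have [t0 [Hr0 [Hw0 Ht0]]] := IH' x Hx Ps' HPs'.
    have [t1 [Hst1 [Hw1 Ht1]]] := Hpb t0 Hw0 Ht0.
    exists t1; split; first exact: (reds_snoc Hr0 Hst1).
    by split.
  move=> Ps HPs; exists s; split; first exact: reds_refl.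
  split=> // p Hp; apply: Hinit => z.
  case: (Htri io z) => [Hl|[->|Hl]]; [by left|by right|].
  by exfalso; apply: Hnex; exists z.
move=> Ps HPs; case: (classic (is_limit lt a)) => [Hl|Hnl].
  have Hli := Hop Hl.
  have [t' [Hr [_ Ht']]] : exists t', reds arity R s t' /\ wf arity t' /\
      forall p, p \in Ps -> t p = t' p.
    apply: (LIM a t Hl Hli) => // be Hbe; apply: MAIN; first by left.
    by [].
  by exists t'.
have HQa := MAIN a (or_intror erefl) (fun H => False_ind _ (Hnl H)).
have HPs' : nonbot (T a) Ps by move=> p Hp; rewrite -(Hcl Hnl); apply: HPs.
have [t' [Hr [_ Ht']]] := HQa Ps HPs'.
exists t'; split=> // p Hp; by rewrite (Hcl Hnl) Ht'.
Qed.
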